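(* Let $\phi(x,y,z)=\alpha x+\beta y+\gamma z$ with $\alpha,\beta,\gamma\in\mathbb{R}$ not all zero, and let $S\subset\mathbb{R}^3$ be a surface of Riemann type foliated by circles (or arcs of circles) lying in parallel planes, all orthogonal to a nonzero vector $\vec w\in\mathbb{R}^3$. If $S$ is $\phi$-minimal, then $\vec w$ is proportional to the $\phi$-density vector $\vec v=(\alpha,\beta,\gamma)$, and $S$ is a surface of revolution whose axis is parallel to $\vec v$.
   Context: For a smooth oriented surface $S\subset\mathbb{R}^3$ with unit normal $N$, $H$ denotes its mean curvature normalized so that the mean curvature vector is $\Delta_S X=2HN$ (for a graph $z=u(x,y)$ with upward normal, $2H=\operatorname{div}(\nabla u/\sqrt{1+|\nabla u|^2})$). For $\phi(x,y,z)=\alpha x+\beta y+\gamma z$, the $\phi$-density vector is $\vec v=(\alpha,\beta,\gamma)$ and the $\phi$-mean curvature is $H_\phi=H-\tfrac12\langle N,\vec v\rangle$; $S$ is $\phi$-minimal if $H_\phi\equiv0$. A surface of Riemann type is a surface generated by a smooth one-parameter family of circles (or arcs of circles) all lying in parallel planes; e.g. if the planes are parallel to the $xy$-plane, locally $X(s,t)=(a(s),b(s),s)+r(s)(\cos t,\sin t,0)$ with $a,b,r$ smooth, $r>0$, $t$ in an interval. The result is local. *)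

(* Defs.v *)
From Stdlib Require Import Reals.
Open Scope R_scope.

Record V3 := mkV { vx : R; vy : R; vz : R }.

Definition vzero : V3 := mkV 0 0 0.
Definition vadd (p q : V3) : V3 := mkV (vx p + vx q) (vy p + vy q) (vz p + vz q).
Definition vscale (c : R) (p : V3) : V3 := mkV (c * vx p) (c * vy p) (c * vz p).
Definition dot (p q : V3) : R := vx p * vx q + vy p * vy q + vz p * vz q.
Definition cross (p q : V3) : V3 :=
  mkV (vy p * vz q - vz p * vy q)
      (vz p * vx q - vx p * vz q)
      (vx p * vy q - vy p * vx q).
Definition vnorm (p : V3) : R := sqrt (dot p p).

Definition smooth_on (f : R -> R) (s0 s1 : R) : Prop :=
  exists D : nat -> R -> R, D O = f /\
    forall n x, s0 < x < s1 -> derivable_pt_lim (D n) x (D (S n) x).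

Definition pd_s (X Y : R -> R -> V3) (s t : R) : Prop :=
  derivable_pt_lim (fun s' => vx (X s' t)) s (vx (Y s t)) /\
  derivable_pt_lim (fun s' => vy (X s' t)) s (vy (Y s t)) /\
  derivable_pt_lim (fun s' => vz (X s' t)) s (vz (Y s t)).
Definition pd_t (X Y : R -> R -> V3) (s t : R) : Prop :=
  derivable_pt_lim (fun t' => vx (X s t')) t (vx (Y s t)) /\
  derivable_pt_lim (fun t' => vy (X s t')) t (vy (Y s t)) /\
  derivable_pt_lim (fun t' => vz (X s t')) t (vz (Y s t)).

(* Mean curvature of a parametrized surface from its first and second
   derivatives, with unit normal N = (Xs x Xt)/|Xs x Xt|, normalized so that
   Delta X = 2 H N:  H = (E n - 2 F m + G l) / (2 (E G - F^2)). *)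
Definition unit_normal (Xs Xt : V3) : V3 := vscale (/ vnorm (cross Xs Xt)) (cross Xs Xt).
Definition mean_curv (Xs Xt Xss Xst Xtt : V3) : R :=
  let N := unit_normal Xs Xt in
  let E := dot Xs Xs in let F := dot Xs Xt in let G := dot Xt Xt in
  let l := dot Xss N in let m := dot Xst N in let n := dot Xtt N in
  (E * n - 2 * F * m + G * l) / (2 * (E * G - F * F)).

Definition phi_mean_curv (v : V3) (Xs Xt Xss Xst Xtt : V3) : R :=
  mean_curv Xs Xt Xss Xst Xtt - / 2 * dot (unit_normal Xs Xt) v.

Definition phi_minimal_param (X : R -> R -> V3) (v : V3) (s0 s1 t0 t1 : R) : Prop :=
  exists Xs Xt Xss Xst Xtt : R -> R -> V3,
    forall s t, s0 < s < s1 -> t0 < t < t1 ->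
      pd_s X Xs s t /\ pd_t X Xt s t /\
      pd_s Xs Xss s t /\ pd_t Xs Xst s t /\ pd_t Xt Xtt s t /\
      cross (Xs s t) (Xt s t) <> vzero /\
      phi_mean_curv v (Xs s t) (Xt s t) (Xss s t) (Xst s t) (Xtt s t) = 0.

(* Riemann-type surface in planes orthogonal to u := e1 x e2 (e1, e2 orthonormal):
   circle centers c(s) = a(s) e1 + b(s) e2 + s u, radius r(s). *)
Definition riemann_center (a b : R -> R) (e1 e2 : V3) (s : R) : V3 :=
  vadd (vadd (vscale (a s) e1) (vscale (b s) e2)) (vscale s (cross e1 e2)).
Definition riemann_X (a b r : R -> R) (e1 e2 : V3) (s t : R) : V3 :=
  vadd (riemann_center a b e1 e2 s)
       (vscale (r s) (vadd (vscale (cos t) e1) (vscale (sin t) e2))).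

(* Main.v *)
Require Import Defs.
From Stdlib Require Import Reals Lra Nsatz.
From Coquelicot Require Import Coquelicot.
Open Scope R_scope.

Definition comb (e1 e2 : V3) (x y z : R) : V3 :=
  vadd (vadd (vscale x e1) (vscale y e2)) (vscale z (cross e1 e2)).
Lemma V3_ext p q : vx p = vx q -> vy p = vy q -> vz p = vz q -> p = q.
Proof. destruct p, q; simpl; intros; subst; reflexivity. Qed.

Lemma loc_int (lo hi x : R) (P : R -> Prop) :
  lo < x < hi -> (forall y, lo < y < hi -> P y) -> locally x P.
Proof.
  intros Hx HP.
  assert (Hpos : 0 < Rmin (x - lo) (hi - x)) by (apply Rmin_pos; lra).
  exists (mkposreal _ Hpos). intros y Hy. apply HP.
  change (Rabs (y - x) < Rmin (x - lo) (hi - x)) in Hy.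
  pose proof (Rmin_l (x - lo) (hi - x)). pose proof (Rmin_r (x - lo) (hi - x)).
  apply Rabs_def2 in Hy. lra.
Qed.

Lemma der_lin3 f g h f' g' h' k1 k2 k3 x :
  derivable_pt_lim f x f' -> derivable_pt_lim g x g' -> derivable_pt_lim h x h' ->
  derivable_pt_lim (fun y => f y * k1 + g y * k2 + h y * k3) x (f' * k1 + g' * k2 + h' * k3).
Proof.
  intros Hf Hg Hh.
  pose proof (derivable_pt_lim_plus _ _ _ _ _
    (derivable_pt_lim_plus _ _ _ _ _
      (derivable_pt_lim_mult _ (fun _ => k1) _ _ _ Hf (derivable_pt_lim_const k1 x))
      (derivable_pt_lim_mult _ (fun _ => k2) _ _ _ Hg (derivable_pt_lim_const k2 x)))
      (derivable_pt_lim_mult _ (fun _ => k3) _ _ _ Hh (derivable_pt_lim_const k3 x))) as D.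
  unfold plus_fct, mult_fct in D.
  match type of D with derivable_pt_lim _ _ ?l =>
    replace (f' * k1 + g' * k2 + h' * k3) with l by ring end.
  exact D.
Qed.

Lemma comp_der e1 e2 (Y : R -> V3) al be ga al' be' ga' lo hi x Z :
  lo < x < hi -> (forall y, lo < y < hi -> Y y = comb e1 e2 (al y) (be y) (ga y)) ->
  derivable_pt_lim al x al' -> derivable_pt_lim be x be' -> derivable_pt_lim ga x ga' ->
  derivable_pt_lim (fun y => vx (Y y)) x (vx Z) ->
  derivable_pt_lim (fun y => vy (Y y)) x (vy Z) ->
  derivable_pt_lim (fun y => vz (Y y)) x (vz Z) -> Z = comb e1 e2 al' be' ga'.
Proof.
  intros Hx HY Ha Hb Hc Dx Dy Dz. apply V3_ext.
  - apply (uniqueness_limite (fun y => vx (Y y)) x); auto.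
    apply is_derive_Reals.
    apply is_derive_ext_loc with (fun y => al y * vx e1 + be y * vx e2 + ga y * vx (cross e1 e2)).
    + apply (loc_int lo hi); auto. intros y Hy. rewrite (HY y Hy). unfold comb; simpl; ring.
    + apply is_derive_Reals. unfold comb; simpl. apply der_lin3; auto.
  - apply (uniqueness_limite (fun y => vy (Y y)) x); auto.
    apply is_derive_Reals.
    apply is_derive_ext_loc with (fun y => al y * vy e1 + be y * vy e2 + ga y * vy (cross e1 e2)).
    + apply (loc_int lo hi); auto. intros y Hy. rewrite (HY y Hy). unfold comb; simpl; ring.
    + apply is_derive_Reals. unfold comb; simpl. apply der_lin3; auto.
  - apply (uniqueness_limite (fun y => vz (Y y)) x); auto.
    apply is_derive_Reals.
    apply is_derive_ext_loc with (fun y => al y * vz e1 + be y * vz e2 + ga y * vz (cross e1 e2)).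
    + apply (loc_int lo hi); auto. intros y Hy. rewrite (HY y Hy). unfold comb; simpl; ring.
    + apply is_derive_Reals. unfold comb, cross; simpl. apply der_lin3; auto.
Qed.

Lemma dot_comb e1 e2 x1 y1 z1 x2 y2 z2 :
  dot e1 e1 = 1 -> dot e2 e2 = 1 -> dot e1 e2 = 0 ->
  dot (comb e1 e2 x1 y1 z1) (comb e1 e2 x2 y2 z2) = x1*x2 + y1*y2 + z1*z2.
Proof.
  destruct e1 as [a1 a2 a3], e2 as [b1 b2 b3]. unfold dot, comb, cross, vadd, vscale; simpl.
  intros H1 H2 H3. nsatz.
Qed.
Lemma cross_comb e1 e2 x1 y1 z1 x2 y2 z2 :
  dot e1 e1 = 1 -> dot e2 e2 = 1 -> dot e1 e2 = 0 ->
  cross (comb e1 e2 x1 y1 z1) (comb e1 e2 x2 y2 z2) =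
  comb e1 e2 (y1*z2 - z1*y2) (z1*x2 - x1*z2) (x1*y2 - y1*x2).
Proof.
  destruct e1 as [a1 a2 a3], e2 as [b1 b2 b3]. unfold dot; simpl. intros H1 H2 H3.
  apply V3_ext; unfold comb, cross, vadd, vscale; simpl; nsatz.
Qed.
Lemma comb_complete e1 e2 x :
  dot e1 e1 = 1 -> dot e2 e2 = 1 -> dot e1 e2 = 0 ->
  x = comb e1 e2 (dot x e1) (dot x e2) (dot x (cross e1 e2)).
Proof.
  destruct e1 as [a1 a2 a3], e2 as [b1 b2 b3], x as [c1 c2 c3]. unfold dot; simpl. intros H1 H2 H3.
  apply V3_ext; unfold comb, cross, vadd, vscale; simpl; nsatz.
Qed.
Lemma scale_comb e1 e2 k x y z : vscale k (comb e1 e2 x y z) = comb e1 e2 (k*x) (k*y) (k*z).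
Proof. apply V3_ext; unfold comb, vscale, vadd; simpl; ring. Qed.

Definition dot3 (x1 y1 z1 x2 y2 z2 : R) := x1*x2+y1*y2+z1*z2.
Definition Qpoly (x1 y1 z1 x2 y2 z2 x3 y3 z3 x4 y4 z4 x5 y5 z5 p q g : R) : R :=
  let cx := y1*z2 - z1*y2 in let cy := z1*x2 - x1*z2 in let cz := x1*y2 - y1*x2 in
  let E := dot3 x1 y1 z1 x1 y1 z1 in let F := dot3 x1 y1 z1 x2 y2 z2 in
  let G := dot3 x2 y2 z2 x2 y2 z2 in
  dot3 x1 y1 z1 x1 y1 z1 * dot3 cx cy cz x5 y5 z5 - 2 * F * dot3 cx cy cz x4 y4 z4
  + G * dot3 cx cy cz x3 y3 z3 - dot3 cx cy cz cx cy cz * dot3 cx cy cz p q g.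

Lemma phi_coords e1 e2 x1 y1 z1 x2 y2 z2 x3 y3 z3 x4 y4 z4 x5 y5 z5 p q g :
  dot e1 e1 = 1 -> dot e2 e2 = 1 -> dot e1 e2 = 0 ->
  cross (comb e1 e2 x1 y1 z1) (comb e1 e2 x2 y2 z2) <> vzero ->
  phi_mean_curv (comb e1 e2 p q g) (comb e1 e2 x1 y1 z1) (comb e1 e2 x2 y2 z2)
     (comb e1 e2 x3 y3 z3) (comb e1 e2 x4 y4 z4) (comb e1 e2 x5 y5 z5) = 0 ->
  Qpoly x1 y1 z1 x2 y2 z2 x3 y3 z3 x4 y4 z4 x5 y5 z5 p q g = 0.
Proof.
  intros H1 H2 H3 Hc Hp.
  unfold phi_mean_curv, mean_curv, unit_normal, vnorm in Hp.
  rewrite (cross_comb _ _ _ _ _ _ _ _ H1 H2 H3) in Hp, Hc.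
  rewrite scale_comb in Hp. rewrite !(dot_comb _ _ _ _ _ _ _ _ H1 H2 H3) in Hp.
  set (cx := y1*z2 - z1*y2) in *. set (cy := z1*x2 - x1*z2) in *. set (cz := x1*y2 - y1*x2) in *.
  assert (HS : 0 < cx*cx + cy*cy + cz*cz).
  { destruct (Rlt_or_le 0 (cx*cx + cy*cy + cz*cz)) as [h|h]; auto. exfalso. apply Hc.
    assert (cx = 0) by nra. assert (cy = 0) by nra. assert (cz = 0) by nra.
    apply V3_ext; unfold comb, vadd, vscale, vzero, cross; simpl; rewrite H, H0, H4; ring. }
  set (S := cx*cx + cy*cy + cz*cz) in *.
  assert (HK : 0 < sqrt S) by (apply sqrt_lt_R0; auto).
  set (K := sqrt S) in *.
  assert (HEG : (x1*x1+y1*y1+z1*z1)*(x2*x2+y2*y2+z2*z2) - (x1*x2+y1*y2+z1*z2)*(x1*x2+y1*y2+z1*z2) = S)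
    by (unfold S, cx, cy, cz; ring).
  rewrite HEG in Hp.
  unfold Qpoly, dot3. cbv zeta. fold cx cy cz. fold S.
  match type of Hp with ?L = 0 =>
    transitivity (L * (2 * S * K)) end.
  - field. split; lra.
  - rewrite Hp. ring.
Qed.

Definition Zon (t0 t1 : R) (f : R -> R) := forall t, t0 < t < t1 -> f t = 0.

Lemma Zon_der t0 t1 f f' : Zon t0 t1 f ->
  (forall t, t0 < t < t1 -> is_derive f t (f' t)) -> Zon t0 t1 f'.
Proof.
  intros Hz Hd t Ht.
  assert (H0 : is_derive (fun _ => 0) t 0) by (apply is_derive_Reals; apply derivable_pt_lim_const).
  assert (H1 : is_derive f t 0).
  { apply is_derive_ext_loc with (fun _ => 0); [|exact H0].
    apply (loc_int t0 t1); [exact Ht|]. intros y Hy. symmetry; apply Hz; exact Hy. }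
  pose proof (is_derive_unique _ _ _ H1). pose proof (is_derive_unique _ _ _ (Hd t Ht)).
  congruence.
Qed.

Definition T7 (A0 A1 B1 A2 B2 A3 B3 t : R) : R :=
  A0 + (A1 * cos t + B1 * sin t) + (A2 * cos (2*t) + B2 * sin (2*t))
     + (A3 * cos (3*t) + B3 * sin (3*t)).

Lemma T7_der A0 A1 B1 A2 B2 A3 B3 t :
  is_derive (T7 A0 A1 B1 A2 B2 A3 B3) t (T7 0 B1 (-A1) (2*B2) (-(2*A2)) (3*B3) (-(3*A3)) t).
Proof.
  unfold T7. auto_derive; auto. ring.
Qed.

Lemma Zon_T7_der t0 t1 A0 A1 B1 A2 B2 A3 B3 :
  Zon t0 t1 (T7 A0 A1 B1 A2 B2 A3 B3) ->
  Zon t0 t1 (T7 0 B1 (-A1) (2*B2) (-(2*A2)) (3*B3) (-(3*A3))).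
Proof. intros H. apply (Zon_der _ _ _ _ H). intros; apply T7_der. Qed.

Lemma Zon_T7_step t0 t1 k A0 A1 B1 A2 B2 A3 B3 :
  Zon t0 t1 (T7 A0 A1 B1 A2 B2 A3 B3) ->
  Zon t0 t1 (T7 (k*A0) ((k-1)*A1) ((k-1)*B1) ((k-4)*A2) ((k-4)*B2) ((k-9)*A3) ((k-9)*B3)).
Proof.
  intros H. pose proof (Zon_T7_der _ _ _ _ _ _ _ _ _ H) as H1.
  pose proof (Zon_T7_der _ _ _ _ _ _ _ _ _ H1) as H2.
  intros t Ht. specialize (H t Ht). specialize (H2 t Ht).
  transitivity (T7 0 (-A1) (-B1) (2 * (-(2*A2))) (-(2*(2*B2))) (3 * (-(3*A3))) (-(3*(3*B3))) t
     + k * T7 A0 A1 B1 A2 B2 A3 B3 t).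
  - unfold T7. ring.
  - rewrite H2, H. ring.
Qed.

Lemma alg_harm A B c s : A*c + B*s = 0 -> B*c - A*s = 0 -> s*s + c*c = 1 -> A = 0 /\ B = 0.
Proof.
  intros H1 H2 H3. split.
  - replace A with (A*(s*s+c*c)) by (rewrite H3; ring).
    replace (A*(s*s+c*c)) with (c*(A*c+B*s) - s*(B*c - A*s)) by ring. rewrite H1, H2. ring.
  - replace B with (B*(s*s+c*c)) by (rewrite H3; ring).
    replace (B*(s*s+c*c)) with (s*(A*c+B*s) + c*(B*c - A*s)) by ring. rewrite H1, H2. ring.
Qed.

Lemma harm_zero t0 t1 A B : t0 < t1 -> Zon t0 t1 (T7 0 A B 0 0 0 0) -> A = 0 /\ B = 0.
Proof.
  intros Ht H. pose proof (Zon_T7_der _ _ _ _ _ _ _ _ _ H) as H1.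
  set (m := (t0 + t1)/2). assert (Hm : t0 < m < t1) by (unfold m; lra).
  specialize (H m Hm). specialize (H1 m Hm). unfold T7 in *.
  pose proof (sin2_cos2 m). unfold Rsqr in *.
  apply (alg_harm _ _ (cos m) (sin m)); auto; [lra|lra].
Qed.

Lemma harm2_zero t0 t1 A B : t0 < t1 -> Zon t0 t1 (T7 0 0 0 A B 0 0) -> A = 0 /\ B = 0.
Proof.
  intros Ht H. pose proof (Zon_T7_der _ _ _ _ _ _ _ _ _ H) as H1.
  set (m := (t0 + t1)/2). assert (Hm : t0 < m < t1) by (unfold m; lra).
  specialize (H m Hm). specialize (H1 m Hm). unfold T7 in *.
  pose proof (sin2_cos2 (2*m)). unfold Rsqr in *.
  apply (alg_harm _ _ (cos (2*m)) (sin (2*m))); auto; [lra|lra].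
Qed.

Lemma harm3_zero t0 t1 A B : t0 < t1 -> Zon t0 t1 (T7 0 0 0 0 0 A B) -> A = 0 /\ B = 0.
Proof.
  intros Ht H. pose proof (Zon_T7_der _ _ _ _ _ _ _ _ _ H) as H1.
  set (m := (t0 + t1)/2). assert (Hm : t0 < m < t1) by (unfold m; lra).
  specialize (H m Hm). specialize (H1 m Hm). unfold T7 in *.
  pose proof (sin2_cos2 (3*m)). unfold Rsqr in *.
  apply (alg_harm _ _ (cos (3*m)) (sin (3*m))); auto; [lra|lra].
Qed.

Lemma T7_zero t0 t1 A0 A1 B1 A2 B2 A3 B3 : t0 < t1 ->
  Zon t0 t1 (T7 A0 A1 B1 A2 B2 A3 B3) ->
  A0 = 0 /\ A1 = 0 /\ B1 = 0 /\ A2 = 0 /\ B2 = 0 /\ A3 = 0 /\ B3 = 0.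
Proof.
  intros Ht H.
  pose proof (Zon_T7_step _ _ 9 _ _ _ _ _ _ _ H) as H9.
  pose proof (Zon_T7_step _ _ 4 _ _ _ _ _ _ _ H9) as H4.
  pose proof (Zon_T7_step _ _ 1 _ _ _ _ _ _ _ H4) as H1.
  set (m := (t0 + t1)/2). assert (Hm : t0 < m < t1) by (unfold m; lra).
  assert (EA0 : A0 = 0).
  { specialize (H1 m Hm). unfold T7 in H1. ring_simplify in H1. lra. }
  subst A0.
  assert (E1 : A1 = 0 /\ B1 = 0).
  { assert (Z : Zon t0 t1 (T7 0 (((4-1)*((9-1)*A1))) ((4-1)*((9-1)*B1)) 0 0 0 0)).
    { intros t Htt. etransitivity; [|exact (H4 t Htt)]. unfold T7. ring. }
    destruct (harm_zero _ _ _ _ Ht Z). lra. }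
  destruct E1; subst A1 B1.
  assert (E2 : A2 = 0 /\ B2 = 0).
  { assert (Z : Zon t0 t1 (T7 0 0 0 ((9-4)*A2) ((9-4)*B2) 0 0)).
    { intros t Htt. etransitivity; [|exact (H9 t Htt)]. unfold T7. ring. }
    destruct (harm2_zero _ _ _ _ Ht Z). lra. }
  destruct E2; subst A2 B2.
  assert (E3 : A3 = 0 /\ B3 = 0).
  { apply (harm3_zero _ _ _ _ Ht). intros t Htt. etransitivity; [|exact (H t Htt)]. unfold T7. ring. }
  destruct E3. repeat split; auto.
Qed.

Section S.
Variables (r r1 r2 a1 a2 b1 b2 p q g : R).
Definition rho2 := a1*a1 + b1*b1.
Definition m1 := g*a1 - p.
Definition m2 := g*b1 - q.
Definition uu := (a1*a1 - b1*b1)/2.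
Definition ww := a1*b1.
Definition K0 := 1 + r1*r1.
Definition cA0 := 1 + rho2 + r1*r1 - r*r2 - r*(K0*g*r1 + r1*(a1*m1+b1*m2) + g*r1*rho2/2).
Definition cA1 := 2*r1*a1 - r*a2 - r*(K0*m1 + 2*r1*r1*g*a1 + rho2*m1/2 + uu*m1/2 + ww*m2/2).
Definition cB1 := 2*r1*b1 - r*b2 - r*(K0*m2 + 2*r1*r1*g*b1 + rho2*m2/2 - uu*m2/2 + ww*m1/2).
Definition cA2 := - r*(r1*(a1*m1 - b1*m2) + g*r1*uu).
Definition cB2 := - r*(r1*(a1*m2 + b1*m1) + g*r1*ww).
Definition cA3 := - r*(uu*m1 - ww*m2)/2.
Definition cB3 := - r*(uu*m2 + ww*m1)/2.
End S.

Lemma Q_fourier_u r r1 r2 a1 a2 b1 b2 p q g u :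
  let d := 1 + u*u in let c := (1 - u*u)/d in let s := 2*u/d in
  Qpoly (a1 + r1*c) (b1 + r1*s) 1 (-(r*s)) (r*c) 0 (a2 + r2*c) (b2 + r2*s) 0
        (-(r1*s)) (r1*c) 0 (-(r*c)) (-(r*s)) 0 p q g
  = r*r * (cA0 r r1 r2 a1 b1 p q g + (cA1 r r1 a1 a2 b1 p q g * c + cB1 r r1 a1 b1 b2 p q g * s)
     + (cA2 r r1 a1 b1 p q g * (c*c - s*s) + cB2 r r1 a1 b1 p q g * (2*s*c))
     + (cA3 r a1 b1 p q g * (4*c*c*c - 3*c) + cB3 r a1 b1 p q g * (3*s - 4*s*s*s))).
Proof.
  intros d c s.
  assert (Hd : d <> 0) by (unfold d; nra).
  unfold Qpoly, dot3, cA0, cA1, cB1, cA2, cB2, cA3, cB3, rho2, m1, m2, uu, ww, K0, c, s.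
  cbv zeta. unfold d in *. Time field. exact Hd.
Qed.

Lemma Q_circle r r1 r2 a1 a2 b1 b2 p q g c s :
  c*c + s*s = 1 ->
  Qpoly (a1 + r1*c) (b1 + r1*s) 1 (-(r*s)) (r*c) 0 (a2 + r2*c) (b2 + r2*s) 0
        (-(r1*s)) (r1*c) 0 (-(r*c)) (-(r*s)) 0 p q g
  = r*r * (cA0 r r1 r2 a1 b1 p q g + (cA1 r r1 a1 a2 b1 p q g * c + cB1 r r1 a1 b1 b2 p q g * s)
     + (cA2 r r1 a1 b1 p q g * (c*c - s*s) + cB2 r r1 a1 b1 p q g * (2*s*c))
     + (cA3 r a1 b1 p q g * (4*c*c*c - 3*c) + cB3 r a1 b1 p q g * (3*s - 4*s*s*s))).
Proof.
  intros Hcs.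
  destruct (Req_dec c (-1)) as [Hc|Hc].
  - assert (Hs : s = 0) by nra. subst c s.
    unfold Qpoly, dot3, cA0, cA1, cB1, cA2, cB2, cA3, cB3, rho2, m1, m2, uu, ww, K0. cbv zeta. field.
  - assert (H1c : 1 + c <> 0) by lra.
    set (u := s / (1 + c)).
    assert (Hd : 1 + u*u <> 0) by nra.
    assert (Hu2 : u*u = (1-c)/(1+c)).
    { unfold u. replace (s/(1+c) * (s/(1+c))) with ((s*s)/((1+c)*(1+c))) by (field; auto).
      replace (s*s) with ((1-c)*(1+c)) by nra. field; auto. }
    assert (Ec : c = (1 - u*u)/(1 + u*u)).
    { rewrite Hu2. field. split; auto. intro h. apply H1c.
      apply (Rmult_eq_reg_r 2); [|lra]. lra. }
    assert (Es : s = 2*u/(1 + u*u)).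
    { rewrite Hu2. unfold u. field. split; auto. intro h. apply H1c. lra. }
    clearbody u. rewrite Ec, Es. apply Q_fourier_u.
Qed.

Lemma cos3 t : cos (3*t) = 4*cos t*cos t*cos t - 3*cos t.
Proof.
  replace (3*t) with (2*t + t) by ring. rewrite cos_plus, cos_2a, sin_2a.
  pose proof (sin2_cos2 t) as H. unfold Rsqr in H. nsatz.
Qed.
Lemma sin3 t : sin (3*t) = 3*sin t - 4*sin t*sin t*sin t.
Proof.
  replace (3*t) with (2*t + t) by ring. rewrite sin_plus, cos_2a, sin_2a.
  pose proof (sin2_cos2 t) as H. unfold Rsqr in H. nsatz.
Qed.

Lemma Q_trig r r1 r2 a1 a2 b1 b2 p q g t :
  Qpoly (a1 + r1*cos t) (b1 + r1*sin t) 1 (-(r*sin t)) (r*cos t) 0 (a2 + r2*cos t) (b2 + r2*sin t) 0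
        (-(r1*sin t)) (r1*cos t) 0 (-(r*cos t)) (-(r*sin t)) 0 p q g
  = r*r * T7 (cA0 r r1 r2 a1 b1 p q g) (cA1 r r1 a1 a2 b1 p q g) (cB1 r r1 a1 b1 b2 p q g)
      (cA2 r r1 a1 b1 p q g) (cB2 r r1 a1 b1 p q g) (cA3 r a1 b1 p q g) (cB3 r a1 b1 p q g) t.
Proof.
  rewrite Q_circle.
  - unfold T7. rewrite cos_2a, sin_2a, cos3, sin3. ring.
  - pose proof (sin2_cos2 t) as H. unfold Rsqr in H. lra.
Qed.

Lemma alg_point r r1 a1 b1 p q g :
  0 < r -> cA3 r a1 b1 p q g = 0 -> cB3 r a1 b1 p q g = 0 ->
  cA2 r r1 a1 b1 p q g = 0 -> cB2 r r1 a1 b1 p q g = 0 ->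
  ~ (p = 0 /\ q = 0 /\ g = 0) -> (a1*a1 + b1*b1) * r1 = 0.
Proof.
  intros Hr H3 H3' H2 H2' Hv.
  unfold cA3, cB3, cA2, cB2 in *.
  set (U := uu a1 b1) in *. set (W := ww a1 b1) in *.
  set (M1 := m1 a1 p g) in *. set (M2 := m2 b1 q g) in *.
  assert (E1 : U*M1 - W*M2 = 0).
  { apply (Rmult_eq_reg_l (-r/2)); [|lra]. rewrite Rmult_0_r, <- H3. field. }
  assert (E2 : U*M2 + W*M1 = 0).
  { apply (Rmult_eq_reg_l (-r/2)); [|lra]. rewrite Rmult_0_r, <- H3'. field. }
  assert (HUW : U*U + W*W = (a1*a1+b1*b1)*(a1*a1+b1*b1)/4) by (unfold U, W, uu, ww; field).
  destruct (Req_dec (a1*a1+b1*b1) 0) as [h|h]; [rewrite h; ring|].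
  assert (Hpos : 0 < U*U + W*W) by (rewrite HUW; nra).
  assert (Hm : (U*U+W*W)*(M1*M1+M2*M2) = 0).
  { replace ((U*U+W*W)*(M1*M1+M2*M2)) with ((U*M1 - W*M2)*(U*M1 - W*M2) + (U*M2+W*M1)*(U*M2+W*M1)) by ring.
    rewrite E1, E2. ring. }
  assert (Hm2 : M1*M1+M2*M2 = 0).
  { apply (Rmult_eq_reg_l (U*U+W*W)); [|lra]. rewrite Hm. ring. }
  assert (HM1 : M1 = 0) by nra. assert (HM2 : M2 = 0) by nra.
  rewrite HM1, HM2 in H2, H2'.
  assert (F1 : g*r1*U = 0).
  { apply (Rmult_eq_reg_l (-r)); [|lra]. rewrite Rmult_0_r, <- H2. ring. }
  assert (F2 : g*r1*W = 0).
  { apply (Rmult_eq_reg_l (-r)); [|lra]. rewrite Rmult_0_r, <- H2'. ring. }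
  assert (Hgr : g*r1 = 0).
  { assert ((g*r1)*(g*r1)*(U*U+W*W) = 0).
    { replace ((g*r1)*(g*r1)*(U*U+W*W)) with ((g*r1*U)*(g*r1*U) + (g*r1*W)*(g*r1*W)) by ring.
      rewrite F1, F2. ring. }
    assert (Hq : (g*r1)*(g*r1) = 0).
    { apply (Rmult_eq_reg_r (U*U+W*W)); [|lra]. rewrite H. ring. }
    nra. }
  destruct (Req_dec g 0) as [hg|hg].
  - exfalso. apply Hv. unfold M1, M2, m1, m2 in *. subst g. split; [lra|split; [lra|auto]].
  - assert (r1 = 0) by (apply (Rmult_eq_reg_l g); [lra|auto]). subst r1. ring.
Qed.

Lemma der_prod3 f g h f' g' h' x :
  derivable_pt_lim f x f' -> derivable_pt_lim g x g' -> derivable_pt_lim h x h' ->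
  derivable_pt_lim (fun y => (f y * f y + g y * g y) * h y) x
     ((2*f x*f' + 2*g x*g') * h x + (f x * f x + g x * g x) * h').
Proof.
  intros Hf Hg Hh.
  pose proof (derivable_pt_lim_mult _ _ _ _ _
    (derivable_pt_lim_plus _ _ _ _ _
      (derivable_pt_lim_mult _ _ _ _ _ Hf Hf) (derivable_pt_lim_mult _ _ _ _ _ Hg Hg)) Hh) as D.
  unfold plus_fct, mult_fct in D.
  match type of D with derivable_pt_lim _ _ ?l =>
    replace ((2*f x*f' + 2*g x*g') * h x + (f x * f x + g x * g x) * h') with l by ring end.
  exact D.
Qed.

Lemma der_ar f g f' g' k x :
  derivable_pt_lim f x f' -> derivable_pt_lim g x g' ->
  derivable_pt_lim (fun y => f y + g y * k) x (f' + g' * k).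
Proof.
  intros Hf Hg.
  pose proof (derivable_pt_lim_plus _ _ _ _ _ Hf
      (derivable_pt_lim_mult _ (fun _ => k) _ _ _ Hg (derivable_pt_lim_const k x))) as D.
  unfold plus_fct, mult_fct in D.
  match type of D with derivable_pt_lim _ _ ?l => replace (f' + g' * k) with l by ring end.
  exact D.
Qed.

Lemma X_comb a b r e1 e2 s t :
  riemann_X a b r e1 e2 s t = comb e1 e2 (a s + r s * cos t) (b s + r s * sin t) s.
Proof. apply V3_ext; unfold riemann_X, riemann_center, comb, vadd, vscale; simpl; ring. Qed.

Lemma Zon_derR t0 t1 f f' : Zon t0 t1 f ->
  (forall t, t0 < t < t1 -> derivable_pt_lim f t (f' t)) -> Zon t0 t1 f'.
Proof. intros H D. apply (Zon_der _ _ _ _ H). intros t Ht. apply is_derive_Reals; auto. Qed.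

Lemma const_on f f' lo hi :
  (forall x, lo < x < hi -> derivable_pt_lim f x (f' x)) -> (forall x, lo < x < hi -> f' x = 0) ->
  forall x y, lo < x < hi -> lo < y < hi -> f x = f y.
Proof.
  intros Hd H0 x y Hx Hy.
  destruct (Rtotal_order x y) as [h|[h|h]].
  - destruct (MVT_cor2 f f' x y h) as (c & Hc & Hc').
    + intros c Hc. apply Hd. lra.
    + rewrite H0 in Hc by lra. lra.
  - subst; reflexivity.
  - destruct (MVT_cor2 f f' y x h) as (c & Hc & Hc').
    + intros c Hc. apply Hd. lra.
    + rewrite H0 in Hc by lra. lra.
Qed.

Theorem theorem2 (alpha beta gamma : R)
  (hv : ~ (alpha = 0 /\ beta = 0 /\ gamma = 0))
  (w e1 e2 : V3) (s0 s1 t0 t1 : R) (a b r : R -> R)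
  (hs : s0 < s1) (ht : t0 < t1)
  (hw : w <> vzero)
  (he1 : dot e1 e1 = 1) (he2 : dot e2 e2 = 1) (he12 : dot e1 e2 = 0)
  (hw1 : dot e1 w = 0) (hw2 : dot e2 w = 0)
  (ha : smooth_on a s0 s1) (hb : smooth_on b s0 s1) (hr : smooth_on r s0 s1)
  (hrpos : forall s, s0 < s < s1 -> 0 < r s)
  (hmin : phi_minimal_param (riemann_X a b r e1 e2) (mkV alpha beta gamma) s0 s1 t0 t1) :
  (exists lam : R, w = vscale lam (mkV alpha beta gamma)) /\
  (exists p : V3, forall s, s0 < s < s1 ->
     exists mu : R, riemann_center a b e1 e2 s = vadd p (vscale mu (mkV alpha beta gamma))).
Proof.
  destruct hmin as (Xs & Xt & Xss & Xst & Xtt & H).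
  destruct ha as (Da & Da0 & Dad). destruct hb as (Db & Db0 & Dbd). destruct hr as (Dr & Dr0 & Drd).
  assert (dA : forall x, s0 < x < s1 -> derivable_pt_lim a x (Da 1%nat x))
    by (intros x Hx; rewrite <- Da0; apply Dad; auto).
  assert (dB : forall x, s0 < x < s1 -> derivable_pt_lim b x (Db 1%nat x))
    by (intros x Hx; rewrite <- Db0; apply Dbd; auto).
  assert (dR : forall x, s0 < x < s1 -> derivable_pt_lim r x (Dr 1%nat x))
    by (intros x Hx; rewrite <- Dr0; apply Drd; auto).
  set (v := mkV alpha beta gamma) in *.
  pose proof (comb_complete e1 e2 v he1 he2 he12) as Hv.
  set (p := dot v e1) in *. set (q := dot v e2) in *. set (g := dot v (cross e1 e2)) in *.
  assert (Hpqg : ~ (p = 0 /\ q = 0 /\ g = 0)).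
  { intros (h1 & h2 & h3). apply hv. rewrite h1, h2, h3 in Hv.
    assert (E : v = vzero) by (rewrite Hv; apply V3_ext; unfold comb, vadd, vscale, vzero; simpl; ring).
    unfold v, vzero in E. injection E. auto. }
  assert (HA : forall s t, s0 < s < s1 -> t0 < t < t1 ->
     Xs s t = comb e1 e2 (Da 1%nat s + Dr 1%nat s * cos t) (Db 1%nat s + Dr 1%nat s * sin t) 1).
  { intros s t Hs Ht. destruct (H s t Hs Ht) as ((P1 & P2 & P3) & _).
    apply (comp_der e1 e2 (fun y => riemann_X a b r e1 e2 y t)
       (fun y => a y + r y * cos t) (fun y => b y + r y * sin t) (fun y => y) _ _ _ s0 s1 s);
    [exact Hs | intros y _; apply X_comb | apply der_ar; [apply dA|apply dR]; exact Hs
    | apply der_ar; [apply dB|apply dR]; exact Hs | apply derivable_pt_lim_id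
    | exact P1 | exact P2 | exact P3]. }
  assert (HB : forall s t, s0 < s < s1 -> t0 < t < t1 ->
     Xt s t = comb e1 e2 (-(r s * sin t)) (r s * cos t) 0).
  { intros s t Hs Ht. destruct (H s t Hs Ht) as (_ & (P1 & P2 & P3) & _).
    apply (comp_der e1 e2 (fun y => riemann_X a b r e1 e2 s y)
       (fun y => a s + r s * cos y) (fun y => b s + r s * sin y) (fun _ => s) _ _ _ t0 t1 t);
    [exact Ht | intros y _; apply X_comb
    | apply is_derive_Reals; auto_derive; auto; ring
    | apply is_derive_Reals; auto_derive; auto; ring
    | apply derivable_pt_lim_const | exact P1 | exact P2 | exact P3]. }
  assert (HC : forall s t, s0 < s < s1 -> t0 < t < t1 ->
     Xss s t = comb e1 e2 (Da 2%nat s + Dr 2%nat s * cos t) (Db 2%nat s + Dr 2%nat s * sin t) 0).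
  { intros s t Hs Ht. destruct (H s t Hs Ht) as (_ & _ & (P1 & P2 & P3) & _).
    apply (comp_der e1 e2 (fun y => Xs y t)
       (fun y => Da 1%nat y + Dr 1%nat y * cos t) (fun y => Db 1%nat y + Dr 1%nat y * sin t)
       (fun _ => 1) _ _ _ s0 s1 s);
    [exact Hs | intros y Hy; apply HA; auto
    | apply der_ar; [apply Dad|apply Drd]; exact Hs
    | apply der_ar; [apply Dbd|apply Drd]; exact Hs
    | apply derivable_pt_lim_const | exact P1 | exact P2 | exact P3]. }
  assert (HD : forall s t, s0 < s < s1 -> t0 < t < t1 ->
     Xst s t = comb e1 e2 (-(Dr 1%nat s * sin t)) (Dr 1%nat s * cos t) 0).
  { intros s t Hs Ht. destruct (H s t Hs Ht) as (_ & _ & _ & (P1 & P2 & P3) & _).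
    apply (comp_der e1 e2 (fun y => Xs s y)
       (fun y => Da 1%nat s + Dr 1%nat s * cos y) (fun y => Db 1%nat s + Dr 1%nat s * sin y)
       (fun _ => 1) _ _ _ t0 t1 t);
    [exact Ht | intros y Hy; apply HA; auto
    | apply is_derive_Reals; auto_derive; auto; ring
    | apply is_derive_Reals; auto_derive; auto; ring
    | apply derivable_pt_lim_const | exact P1 | exact P2 | exact P3]. }
  assert (HE : forall s t, s0 < s < s1 -> t0 < t < t1 ->
     Xtt s t = comb e1 e2 (-(r s * cos t)) (-(r s * sin t)) 0).
  { intros s t Hs Ht. destruct (H s t Hs Ht) as (_ & _ & _ & _ & (P1 & P2 & P3) & _).
    apply (comp_der e1 e2 (fun y => Xt s y)
       (fun y => -(r s * sin y)) (fun y => r s * cos y)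
       (fun _ => 0) _ _ _ t0 t1 t);
    [exact Ht | intros y Hy; apply HB; auto
    | apply is_derive_Reals; auto_derive; auto; ring
    | apply is_derive_Reals; auto_derive; auto; ring
    | apply derivable_pt_lim_const | exact P1 | exact P2 | exact P3]. }
  assert (HT : forall s, s0 < s < s1 ->
    Zon t0 t1 (T7 (cA0 (r s) (Dr 1%nat s) (Dr 2%nat s) (Da 1%nat s) (Db 1%nat s) p q g)
                  (cA1 (r s) (Dr 1%nat s) (Da 1%nat s) (Da 2%nat s) (Db 1%nat s) p q g)
                  (cB1 (r s) (Dr 1%nat s) (Da 1%nat s) (Db 1%nat s) (Db 2%nat s) p q g)
                  (cA2 (r s) (Dr 1%nat s) (Da 1%nat s) (Db 1%nat s) p q g)
                  (cB2 (r s) (Dr 1%nat s) (Da 1%nat s) (Db 1%nat s) p q g)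
                  (cA3 (r s) (Da 1%nat s) (Db 1%nat s) p q g)
                  (cB3 (r s) (Da 1%nat s) (Db 1%nat s) p q g))).
  { intros s Hs t Ht. destruct (H s t Hs Ht) as (_ & _ & _ & _ & _ & Hc & Hp).
    rewrite Hv in Hp.
    rewrite (HA s t Hs Ht), (HB s t Hs Ht) in Hc, Hp.
    rewrite (HC s t Hs Ht), (HD s t Hs Ht), (HE s t Hs Ht) in Hp.
    pose proof (phi_coords _ _ _ _ _ _ _ _ _ _ _ _ _ _ _ _ _ _ _ _ he1 he2 he12 Hc Hp) as HQ.
    rewrite Q_trig in HQ.
    pose proof (hrpos s Hs).
    apply (Rmult_eq_reg_l (r s * r s)); [|nra]. rewrite HQ. ring. }
  assert (Hco : forall s, s0 < s < s1 ->
    cA0 (r s) (Dr 1%nat s) (Dr 2%nat s) (Da 1%nat s) (Db 1%nat s) p q g = 0 /\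
    cA1 (r s) (Dr 1%nat s) (Da 1%nat s) (Da 2%nat s) (Db 1%nat s) p q g = 0 /\
    cB1 (r s) (Dr 1%nat s) (Da 1%nat s) (Db 1%nat s) (Db 2%nat s) p q g = 0 /\
    cA2 (r s) (Dr 1%nat s) (Da 1%nat s) (Db 1%nat s) p q g = 0 /\
    cB2 (r s) (Dr 1%nat s) (Da 1%nat s) (Db 1%nat s) p q g = 0 /\
    cA3 (r s) (Da 1%nat s) (Db 1%nat s) p q g = 0 /\
    cB3 (r s) (Da 1%nat s) (Db 1%nat s) p q g = 0).
  { intros s Hs. exact (T7_zero _ _ _ _ _ _ _ _ _ ht (HT s Hs)). }
  assert (Hrho : Zon s0 s1 (fun y => (Da 1%nat y * Da 1%nat y + Db 1%nat y * Db 1%nat y) * Dr 1%nat y)).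
  { intros y Hy. destruct (Hco y Hy) as (_ & _ & _ & h2 & h2' & h3 & h3').
    exact (alg_point _ _ _ _ _ _ _ (hrpos y Hy) h3 h3' h2 h2' Hpqg). }
  assert (Hab : forall s, s0 < s < s1 -> Da 1%nat s = 0 /\ Db 1%nat s = 0).
  { intros s Hs.
    destruct (Req_dec (Da 1%nat s * Da 1%nat s + Db 1%nat s * Db 1%nat s) 0) as [h|h];
      [split; nra|exfalso].
    pose proof (Zon_derR _ _ _ (fun y => (2*Da 1%nat y*Da 2%nat y + 2*Db 1%nat y*Db 2%nat y) * Dr 1%nat y
        + (Da 1%nat y * Da 1%nat y + Db 1%nat y * Db 1%nat y) * Dr 2%nat y) Hrho
        (fun y Hy => der_prod3 _ _ _ _ _ _ y (Dad 1%nat y Hy) (Dbd 1%nat y Hy) (Drd 1%nat y Hy))) as Zd.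
    specialize (Zd s Hs). pose proof (Hrho s Hs) as Z0. simpl in Zd, Z0.
    set (rr := Da 1%nat s * Da 1%nat s + Db 1%nat s * Db 1%nat s) in *.
    assert (hr1 : Dr 1%nat s = 0).
    { apply (Rmult_eq_reg_l rr); [rewrite Z0; ring | exact h]. }
    rewrite hr1 in Zd.
    assert (hr2 : Dr 2%nat s = 0).
    { apply (Rmult_eq_reg_l rr); [|exact h]. rewrite Rmult_0_r. rewrite <- Zd. ring. }
    destruct (Hco s Hs) as (h0 & _).
    unfold cA0, rho2, K0, m1, m2 in h0. rewrite hr1, hr2 in h0. nra. }
  assert (Za : Zon s0 s1 (Da 1%nat)) by (intros y Hy; apply Hab; auto).
  assert (Zb : Zon s0 s1 (Db 1%nat)) by (intros y Hy; apply Hab; auto).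
  pose proof (Zon_derR _ _ _ _ Za (Dad 1%nat)) as Za2.
  pose proof (Zon_derR _ _ _ _ Zb (Dbd 1%nat)) as Zb2.
  set (m := (s0 + s1) / 2).
  assert (Hm : s0 < m < s1) by (unfold m; lra).
  pose proof (hrpos m Hm) as Hrm.
  destruct (Hco m Hm) as (_ & hA1 & hB1 & _).
  unfold cA1, cB1, rho2, K0, m1, m2, uu, ww in hA1, hB1.
  rewrite (Za m Hm), (Zb m Hm), (Za2 m Hm) in hA1. rewrite (Za m Hm), (Zb m Hm), (Zb2 m Hm) in hB1.
  set (r1 := Dr 1%nat m) in *.
  assert (Hp : p = 0).
  { apply (Rmult_eq_reg_l (r m * (1 + r1*r1))); [|nra]. rewrite Rmult_0_r. rewrite <- hA1. field. }
  assert (Hq : q = 0).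
  { apply (Rmult_eq_reg_l (r m * (1 + r1*r1))); [|nra]. rewrite Rmult_0_r. rewrite <- hB1. field. }
  assert (Hg : g <> 0) by (intro hg; apply Hpqg; auto).
  rewrite Hp, Hq in Hv.
  split.
  - pose proof (comb_complete e1 e2 w he1 he2 he12) as Hw.
    assert (E1 : dot w e1 = 0) by (rewrite <- hw1; unfold dot; ring).
    assert (E2 : dot w e2 = 0) by (rewrite <- hw2; unfold dot; ring).
    rewrite E1, E2 in Hw.
    exists (dot w (cross e1 e2) / g).
    rewrite Hv at 1. rewrite Hw at 1. rewrite scale_comb.
    apply V3_ext; unfold comb, vadd, vscale; simpl; field; auto.
  - assert (Ea : forall s, s0 < s < s1 -> a s = a m).
    { intros s Hs. apply (const_on a (Da 1%nat) s0 s1); auto. }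
    assert (Eb : forall s, s0 < s < s1 -> b s = b m).
    { intros s Hs. apply (const_on b (Db 1%nat) s0 s1); auto. }
    exists (comb e1 e2 (a m) (b m) 0). intros s Hs. exists (s / g).
    rewrite Hv at 1. rewrite scale_comb.
    unfold riemann_center. rewrite (Ea s Hs), (Eb s Hs).
    apply V3_ext; unfold comb, vadd, vscale; simpl; field; auto.
Qed.
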